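(* Let $\mathbf{x}=(x_n)$ be a summable nonincreasing sequence of positive reals such that $\mathcal{A}(\mathbf{x})$ is neither a Cantor set nor a finite set, and suppose $x_k=x_{k+1}$ for some $k\in\mathbb{N}$. Then there is $x\in\mathcal{A}(\mathbf{x})$ with $f_{\mathbf{x}}(x)\ge 4$ (where the infinite values $\omega,\mathfrak{c}$ count as $\ge 4$).
   Context: For a summable sequence $\mathbf{x}=(x_n)$ of positive reals, the achievement set is $\mathcal{A}(\mathbf{x})=\{\sum_{n\in A}x_n : A\subseteq\mathbb{N}\}$, and the cardinal function $f_{\mathbf{x}}:\mathcal{A}(\mathbf{x})\to\{1,2,3,\dots\}\cup\{\omega,\mathfrak{c}\}$ sends $x$ to the cardinality of the set of $(\varepsilon_n)\in\{0,1\}^{\mathbb{N}}$ with $\sum\varepsilon_n x_n=x$. *)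

(* Defs.v *)
From HB Require Import structures.
From mathcomp Require Import all_boot all_order all_algebra.
From mathcomp Require Import all_classical all_reals all_analysis.
Set Implicit Arguments. Unset Strict Implicit. Unset Printing Implicit Defensive.
Import Order.TTheory GRing.Theory Num.Theory.
Import numFieldNormedType.Exports.
Local Open Scope classical_set_scope.
Local Open Scope ring_scope.

(* sum_{n in A} x_n, where A is encoded by its indicator eps : nat -> bool *)
Definition subsum (R : realType) (x : R^nat) (eps : nat -> bool) : R :=
  limn (series (fun n => if eps n then x n else 0)).

Definition achievement_set (R : realType) (x : R^nat) : set R :=
  [set y | exists eps : nat -> bool, subsum x eps = y].

(* the set of (eps_n) in {0,1}^N with sum eps_n x_n = y; f_x(y) is its cardinality *)
Definition representations (R : realType) (x : R^nat) (y : R) : set (nat -> bool) :=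
  [set eps | subsum x eps = y].

Definition is_cantor_set (R : realType) (A : set R) : Prop :=
  [/\ A !=set0, compact A, perfect_set A & interior (closure A) = set0].

(* Main.v *)
Require Import Defs.
From HB Require Import structures.
From mathcomp Require Import all_boot all_order all_algebra.
From mathcomp Require Import all_classical all_reals all_analysis.
From mathcomp Require Import lra.
Import Order.TTheory GRing.Theory Num.Theory.
Import numFieldNormedType.Exports.
Local Open Scope classical_set_scope.
Local Open Scope ring_scope.
Set Implicit Arguments. Unset Strict Implicit. Unset Printing Implicit Defensive.

Definition msk (R : realType) (x : R^nat) (e : nat -> bool) : R^nat :=
  fun n => if e n then x n else 0.

Lemma subsumE (R : realType) (x : R^nat) e : subsum x e = limn (series (msk x e)).
Proof. by []. Qed.

Lemma msk_ge0 (R : realType) (x : R^nat) e n : (forall n, 0 < x n) -> 0 <= msk x e n.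
Proof. by move=> xp; rewrite /msk; case: (e n) => //; exact/ltW. Qed.

Lemma msk_le (R : realType) (x : R^nat) e n : (forall n, 0 < x n) -> msk x e n <= x n.
Proof. by move=> xp; rewrite /msk; case: (e n) => //; exact/ltW. Qed.

Lemma cvg_msk (R : realType) (x : R^nat) e : (forall n, 0 < x n) ->
  cvgn (series x) -> cvgn (series (msk x e)).
Proof.
move=> xp xs; apply: (series_le_cvg _ _ _ xs).
- by move=> n; exact: msk_ge0.
- by move=> n; exact/ltW.
- by move=> n; exact: msk_le.
Qed.

Lemma series_nd (R : realType) (u : R^nat) : (forall n, 0 <= u n) ->
  nondecreasing_seq (series u).
Proof.
move=> u0; apply/nondecreasing_seqP => n; rewrite seriesSr lerDl; exact: u0.
Qed.

Lemma partial_le_subsum (R : realType) (x : R^nat) e n : (forall n, 0 < x n) ->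
  cvgn (series x) -> series (msk x e) n <= subsum x e.
Proof.
move=> xp xs; apply: nondecreasing_cvgn_le; last exact: cvg_msk.
by apply: series_nd => m; exact: msk_ge0.
Qed.

Definition tail (R : realType) (x : R^nat) n := limn (series x) - series x n.

Lemma subsum_le_tail (R : realType) (x : R^nat) e n : (forall n, 0 < x n) ->
  cvgn (series x) -> subsum x e <= series (msk x e) n + tail x n.
Proof.
move=> xp xs; rewrite subsumE; apply: limr_le; first exact: cvg_msk.
near=> N.
have nN : (n <= N)%N by near: N; exists n.
have h1 : series (msk x e) N - series (msk x e) n <= series x N - series x n.
  by rewrite !sub_series_geq //; apply: ler_sum => i _; exact: msk_le.
have h2 : series x N <= limn (series x).
  by apply: nondecreasing_cvgn_le => //; apply: series_nd => m; exact/ltW.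
rewrite /tail; lra.
Unshelve. all: end_near.
Qed.

Lemma tail_ge0 (R : realType) (x : R^nat) n : (forall n, 0 < x n) ->
  cvgn (series x) -> 0 <= tail x n.
Proof.
move=> xp xs; rewrite /tail subr_ge0; apply: nondecreasing_cvgn_le => //.
by apply: series_nd => m; exact/ltW.
Qed.

Lemma tail_small (R : realType) (x : R^nat) (eps : R) : 
  cvgn (series x) -> 0 < eps -> exists n, tail x n < eps.
Proof.
move=> xs e0; have /cvgrPdist_lt/(_ eps e0) := xs.
move=> [N _ HN]; exists N; have := HN N (leqnn N) => /=.
by rewrite /tail => /(le_lt_trans (ler_norm _)).
Qed.

Definition agree (n : nat) (e e' : nat -> bool) := forall i, (i < n)%N -> e i = e' i.

Lemma series_agree (R : realType) (x : R^nat) n e e' : agree n e e' ->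
  series (msk x e) n = series (msk x e') n.
Proof.
move=> h; rewrite /series /=; apply: eq_big_nat => i /andP[_ hi].
by rewrite /msk h.
Qed.

Lemma subsum_close (R : realType) (x : R^nat) n e e' : (forall n, 0 < x n) ->
  cvgn (series x) -> agree n e e' -> `|subsum x e - subsum x e'| <= tail x n.
Proof.
move=> xp xs h.
have a1 := partial_le_subsum e n xp xs.
have a2 := partial_le_subsum e' n xp xs.
have b1 := subsum_le_tail e n xp xs.
have b2 := subsum_le_tail e' n xp xs.
rewrite (series_agree x h) in a1 b1.
rewrite ler_norml; apply/andP; split; lra.
Qed.

Definition setb (e : nat -> bool) (j : nat) := fun i => (i == j) || e i.

Lemma subsum_set (R : realType) (x : R^nat) e j : (forall n, 0 < x n) ->
  cvgn (series x) -> e j = false -> subsum x (setb e j) = subsum x e + x j.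
Proof.
move=> xp xs ej.
have H : forall N, (j < N)%N -> series (msk x (setb e j)) N = series (msk x e) N + x j.
  move=> N jN.
  have -> : series (msk x (setb e j)) N
     = \sum_(0 <= i < N) (msk x e i + (if i == j then x j else 0)).
    rewrite /series /=; apply: eq_big_nat => i _; rewrite /msk /setb.
    by case: eqP => [->|_]; rewrite ?ej ?add0r ?addr0.
  rewrite big_split /=; congr (_ + _).
  by rewrite -big_mkcond big_nat1_eq /= jN.
rewrite subsumE; apply: cvg_lim => //.
have : series (msk x e) n + x j @[n --> \oo] --> subsum x e + x j.
  by apply: cvgD; [exact: cvg_msk | exact: cvg_cst].
apply: cvg_trans; apply: near_eq_cvg; near=> N; rewrite H //.
by near: N; exists j.+1.
Unshelve. all: end_near.
Qed.

Lemma cyl_open (i : nat) (b : bool) : open [set e : cantor_space | e i = b].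
Proof.
have hc : continuous (fun e : cantor_space => e i).
  exact: (@proj_continuous nat (fun _ => bool) i).
have := (continuousP _).1 hc [set b]; apply; exact: discrete_open.
Qed.

Lemma cyl_closed (i : nat) (b : bool) : closed [set e : cantor_space | e i = b].
Proof.
have -> : [set e : cantor_space | e i = b] = ~` [set e : cantor_space | e i = ~~ b].
  by apply/seteqP; split => e /=; case: (e i); case: b.
by rewrite closedC; exact: cyl_open.
Qed.

Lemma agree_clopen (e0 : cantor_space) n :
  open [set e : cantor_space | agree n e0 e] /\ closed [set e : cantor_space | agree n e0 e].
Proof.
elim: n => [|n [IHo IHc]].
  have -> : [set e : cantor_space | agree 0 e0 e] = setT.
    by apply/seteqP; split => // e _ i.
  by split; [exact: openT | exact: closedT].
have -> : [set e : cantor_space | agree n.+1 e0 e] =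
   [set e : cantor_space | agree n e0 e] `&` [set e : cantor_space | e n = e0 n].
  apply/seteqP; split => e /=.
    by move=> h; split; [move=> i hi; apply: h; exact: ltnW| rewrite h].
  move=> [h1 h2] i; rewrite ltnS leq_eqVlt => /orP[/eqP ->//|]; exact: h1.
by split; [apply: openI => //; exact: cyl_open | apply: closedI => //; exact: cyl_closed].
Qed.

Lemma agree_nbhs (e0 : cantor_space) n : nbhs e0 [set e : cantor_space | agree n e0 e].
Proof.
apply: open_nbhs_nbhs; split; first exact: (agree_clopen e0 n).1.
by move=> i.
Qed.

Lemma phi_cont (R : realType) (x : R^nat) : (forall n, 0 < x n) ->
  cvgn (series x) -> continuous (fun e : cantor_space => subsum x e).
Proof.
move=> xp xs e; apply/cvgrPdist_le => eps e0.
have [n hn] := tail_small xs e0.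
apply: filterS (agree_nbhs e n) => e' /= h.
apply: le_trans (subsum_close xp xs h) _; exact: ltW.
Qed.

Definition phi (R : realType) (x : R^nat) : cantor_space -> R := fun e => subsum x e.

Lemma ach_eq (R : realType) (x : R^nat) : achievement_set x = phi x @` setT.
Proof.
by apply/seteqP; split => y /= [e]; [move=> <-; exists e | move=> _ <-; exists e].
Qed.

Lemma phi_compact (R : realType) (x : R^nat) (K : set cantor_space) :
  (forall n, 0 < x n) -> cvgn (series x) -> closed K -> compact (phi x @` K).
Proof.
move=> xp xs cK; apply: continuous_compact.
  by apply: continuous_subspaceT; exact: phi_cont.
exact: (subclosed_compact cK cantor_space_compact).
Qed.

Lemma phi_closed (R : realType) (x : R^nat) (K : set cantor_space) :
  (forall n, 0 < x n) -> cvgn (series x) -> closed K -> closed (phi x @` K).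
Proof.
move=> xp xs cK; apply: compact_closed; first exact: Rhausdorff.
exact: phi_compact.
Qed.

Definition clr (e : nat -> bool) (j : nat) := fun i => if i == j then false else e i.

Lemma setb_clr (e : nat -> bool) j : e j = true -> setb (clr e j) j = e.
Proof.
move=> ej; apply/funext => i; rewrite /setb /clr.
by case: eqP => [->|]; rewrite ?ej.
Qed.

Lemma ach_perfect (R : realType) (x : R^nat) : (forall n, 0 < x n) ->
  cvgn (series x) -> perfect_set (achievement_set x).
Proof.
move=> xp xs; have cA : closed (achievement_set x).
  rewrite ach_eq; apply: phi_closed => //; exact: closedT.
split => //; apply/seteqP; split => t.
  move=> lt; rewrite ((closure_id (achievement_set x)).1 cA).
  move=> U /lt [y [_ Ay Uy]]; by exists y.
move=> [e <-] U hU.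
pose y n := if e n then subsum x (clr e n) else subsum x (setb e n).
have yd : forall n, `|subsum x e - y n| = x n.
  move=> n; rewrite /y; case en: (e n).
    have := @subsum_set _ x (clr e n) n xp xs; rewrite /clr eqxx => /(_ erefl).
    rewrite setb_clr // => ->; rewrite addrAC subrr add0r; exact/gtr0_norm.
  rewrite subsum_set // opprD addrA subrr sub0r normrN; exact/gtr0_norm.
have yc : y n @[n --> \oo] --> subsum x e.
  apply/cvgrPdist_lt => eps e0.
  have /cvgrPdist_lt/(_ eps e0) := cvg_series_cvg_0 xs.
  apply: filterS => n; rewrite sub0r normrN yd; exact: le_lt_trans (ler_norm _).
have [N _ HN] : \forall n \near \oo, U (y n) := yc _ hU.
exists (y N); split; last first. exact: HN (leqnn N).
- rewrite /y; case: (e N); eexists; reflexivity.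
- apply/eqP => h; have := yd N; rewrite h subrr normr0 => h0.
  by have := xp N; rewrite -h0 ltxx.
Qed.

Lemma noninj (R : realType) (x : R^nat) (K : set cantor_space) (u v : R) :
  (forall n, 0 < x n) -> cvgn (series x) -> closed K -> u < v ->
  [set` `[u, v]] `<=` phi x @` K ->
  exists e1 e2, [/\ K e1, K e2, e1 <> e2 & phi x e1 = phi x e2].
Proof.
move=> xp xs cK uv sub; apply: contrapT => H.
have inj : forall e1 e2, K e1 -> K e2 -> phi x e1 = phi x e2 -> e1 = e2.
  move=> e1 e2 k1 k2 h; apply: contrapT => ne; apply: H; exists e1, e2; by split.
have uin : [set` `[u, v]] u by rewrite /= in_itv /= lexx ltW.
have vin : [set` `[u, v]] v by rewrite /= in_itv /= lexx ltW.
have [e0 k0 pe0] := sub u uin.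
have [n hn] : exists n, tail x n < v - u by apply: tail_small; rewrite ?subr_gt0.
pose Un := [set e : cantor_space | agree n e0 e].
pose P := phi x @` (K `&` Un).
pose Q := phi x @` (K `&` ~` Un).
have cP : closed P.
  by apply: phi_closed => //; apply: closedI => //; exact: (agree_clopen e0 n).2.
have cQ : closed Q.
  apply: phi_closed => //; apply: closedI => //; rewrite closedC.
  exact: (agree_clopen e0 n).1.
have disj : P `&` Q = set0.
  apply/seteqP; split => // y [[e1 [k1 a1] <-] [e2 [k2 a2] h]].
  by have := inj e1 e2 k1 k2 (esym h) => eq; apply: a2; rewrite -eq.
have sep : separated P Q.
  rewrite /separated -((closure_id P).1 cP) -((closure_id Q).1 cQ).
  by split => //; rewrite setIC.
have cover : [set` `[u, v]] `<=` P `|` Q.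
  move=> t /sub [e k <-]; case: (pselect (Un e)) => h; [left|right]; exists e => //.
case: (connected_subset sep cover (@segment_connected _ u v)) => [hP|hQ].
- have [e [k a] pe] := hP v vin.
  have := subsum_close xp xs a; rewrite /phi in pe pe0; rewrite pe pe0.
  rewrite distrC => h1; have := ler_norm (v - u); lra.
- have [e [k a] pe] := hQ u uin.
  have := inj e0 e k0 k; rewrite pe pe0 => /(_ erefl) eq; apply: a; rewrite -eq.
  by move=> i.
Qed.

Lemma shrink (R : realType) (U C D : set R) : open U -> U !=set0 ->
  U `<=` C `|` D -> closed C ->
  (exists V : set R, [/\ open V, V !=set0 & V `<=` C]) \/
  (exists V : set R, [/\ open V, V !=set0 & V `<=` D]).
Proof.
move=> oU U0 cov cC; case: (pselect (U `<=` C)) => h; [left; by exists U|right].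
have [t [Ut nCt]] : exists t, U t /\ ~ C t.
  apply: contrapT => nh; apply: h => t Ut; apply: contrapT => nC; apply: nh.
  by exists t.
exists (U `&` ~` C); split.
- apply: openI => //; exact: closed_openC.
- by exists t.
- by move=> s [Us nCs]; case: (cov s Us).
Qed.

Lemma open_itv (R : realType) (V : set R) : open V -> V !=set0 ->
  exists u v, u < v /\ [set` `[u, v]] `<=` V.
Proof.
move=> oV [y Vy]; have : nbhs y V by apply: open_nbhs_nbhs.
move/nbhs_ballP => [eps e0 hb]; have e0p : 0 < eps := e0.
exists (y - eps / 2), (y + eps / 2); split; first lra.
move=> t; rewrite /= in_itv /= => /andP[h1 h2]; apply: hb.
rewrite -ball_normE /= ltr_norml; apply/andP; split; lra.
Qed.

Lemma clr_id (e : nat -> bool) j : e j = false -> clr e j = e.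
Proof. by move=> ej; apply/funext => i; rewrite /clr; case: eqP => [->|]. Qed.

Lemma subsum_clr (R : realType) (x : R^nat) e j : (forall n, 0 < x n) ->
  cvgn (series x) -> subsum x e = subsum x (clr e j) + (if e j then x j else 0).
Proof.
move=> xp xs; case ej: (e j).
  have := @subsum_set _ x (clr e j) j xp xs; rewrite /clr eqxx => /(_ erefl).
  by rewrite -/(clr e j) setb_clr.
by rewrite clr_id // addr0.
Qed.

Theorem proposition2p2 (R : realType) (x : R^nat)
  (xpos : forall n, 0 < x n)
  (xsum : cvgn (series x))
  (xnoninc : forall n, x n.+1 <= x n)
  (notcantor : ~ is_cantor_set (achievement_set x))
  (notfinite : ~ finite_set (achievement_set x))
  (k : nat) (hk : x k = x k.+1) :
  exists y, achievement_set x y /\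
    (exists e1 e2 e3 e4 : nat -> bool,
      [/\ representations x y e1, representations x y e2,
          representations x y e3 & representations x y e4] /\
      [/\ e1 <> e2, e1 <> e3 & e1 <> e4] /\ [/\ e2 <> e3, e2 <> e4 & e3 <> e4]).
Proof.
have xp := xpos; have xs := xsum.
have A0 : achievement_set x !=set0.
  by exists (subsum x (fun _ => false)); exists (fun _ => false).
have perf := ach_perfect xp xs.
have comp : compact (achievement_set x).
  by rewrite ach_eq; apply: phi_compact => //; exact: closedT.
have [y0 iy0] : interior (closure (achievement_set x)) !=set0.
  by apply/set0P/eqP => h; apply: notcantor; split.
rewrite -((closure_id _).1 perf.1) in iy0.
pose K' := [set e : cantor_space | e k = false] `&` [set e : cantor_space | e k.+1 = false].
have cK : closed K' by apply: closedI; exact: cyl_closed.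
pose S c := (fun e : cantor_space => phi x e + c) @` K'.
have cS : forall c, closed (S c).
  move=> c; apply: compact_closed; first exact: Rhausdorff.
  apply: continuous_compact; last exact: (subclosed_compact cK cantor_space_compact).
  apply: continuous_subspaceT => e; apply: cvgD; [exact: phi_cont | exact: cvg_cst].
pose a := x k.
have kk : (k == k.+1) = false by rewrite ltn_eqF.
have kk' : (k.+1 == k) = false by rewrite eq_sym.
have cov : interior (achievement_set x) `<=` S 0 `|` (S a `|` S (a + a)).
  move=> t /nbhs_singleton [e <-].
  pose c := clr (clr e k.+1) k.
  have Kc : K' c.
    by split; rewrite /= /c /clr ?eqxx ?kk' //; case: ifP.
  have E1 := subsum_clr e k.+1 xp xs.
  have E2 := subsum_clr (clr e k.+1) k xp xs.
  have ck : clr e k.+1 k = e k by rewrite /clr kk.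
  rewrite ck -/c in E2.
  rewrite E1 E2 -hk.
  case: (e k); case: (e k.+1) => /=; [right; right | right; left | right; left | left];
    exists c => //; rewrite /phi /a; lra.
have ex : exists c, exists V : set R, [/\ open V, V !=set0 & V `<=` S c].
  case: (shrink (@open_interior _ _) (ex_intro _ y0 iy0) cov (cS 0)) => [[V hV]|[V [oV V0 VS]]].
    by exists 0, V.
  case: (shrink oV V0 VS (cS a)) => [[W hW]|[W hW]]; [exists a, W | exists (a + a), W] => //.
have [c [V [oV V0 VS]]] := ex.
have [u [v [uv uvV]]] := open_itv oV V0.
have sub : [set` `[u - c, v - c]] `<=` phi x @` K'.
  move=> t; rewrite /= in_itv /= => /andP[h1 h2].
  have : [set` `[u, v]] (t + c) by rewrite /= in_itv /=; apply/andP; split; lra.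
  move/uvV/VS => [e Ke he]; exists e => //; exact: (addIr c).
have [e1 [e2 [K1 K2 ne heq]]] : exists e1 e2, [/\ K' e1, K' e2, e1 <> e2 & phi x e1 = phi x e2].
  by apply: (noninj xp xs cK _ sub); lra.
move: K1 K2 => [K1a K1b] [K2a K2b].
have [i hi] : exists i, e1 i <> e2 i.
  apply: contrapT => h; apply: ne; apply/funext => i; apply: contrapT => hh; apply: h.
  by exists i.
have hik : (i == k) = false by apply/eqP => eik; apply: hi; rewrite eik K1a K2a.
have hik1 : (i == k.+1) = false by apply/eqP => eik; apply: hi; rewrite eik K1b K2b.
have r1 : subsum x (setb e1 k) = phi x e1 + a by rewrite subsum_set.
have r2 : subsum x (setb e1 k.+1) = phi x e1 + a by rewrite subsum_set // /a hk.
have r3 : subsum x (setb e2 k) = phi x e1 + a by rewrite subsum_set // heq.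
have r4 : subsum x (setb e2 k.+1) = phi x e1 + a by rewrite subsum_set // /a hk heq.
exists (phi x e1 + a); split; first by exists (setb e1 k).
exists (setb e1 k), (setb e1 k.+1), (setb e2 k), (setb e2 k.+1).
split; first by split.
split; split.
- by move=> /(congr1 (fun f => f k)); rewrite /setb eqxx kk K1a.
- by move=> /(congr1 (fun f => f i)); rewrite /setb hik.
- by move=> /(congr1 (fun f => f k)); rewrite /setb eqxx kk K2a.
- by move=> /(congr1 (fun f => f k)); rewrite /setb eqxx kk K1a.
- by move=> /(congr1 (fun f => f i)); rewrite /setb hik1.
- by move=> /(congr1 (fun f => f k)); rewrite /setb eqxx kk K2a.
Qed.
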